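(* Assume $\operatorname{add}(\mathcal N)=\operatorname{cov}(\mathcal N)$. Then $\mathcal{ND}_{\operatorname{add}(\mathcal N)}$ is strongly $\mathfrak c$-algebrable in $\left(\mathbb R^{[0,1]}\right)^{\operatorname{add}(\mathcal N)}$.
   Context: For a regular infinite cardinal $\kappa$, a $\kappa$-sequence $(x_\alpha)_{\alpha<\kappa}$ converges to $x$ if for every neighbourhood $U$ of $x$ there is $\alpha_0<\kappa$ with $x_\alpha\in U$ for all $\alpha_0<\alpha<\kappa$; $\left(\mathbb R^{[0,1]}\right)^{\kappa}$ is the commutative real algebra of $\kappa$-sequences of functions $[0,1]\to\mathbb R$ with indexwise operations. $\lambda$ is Lebesgue measure, $\mathcal N$ the null subsets of $[0,1]$; $\operatorname{add}(\mathcal N)$ the least cardinality of a family of null sets with non-null union, $\operatorname{cov}(\mathcal N)$ the least cardinality of a family of null sets covering $[0,1]$. $\mathcal{ND}_{\kappa}$: $\kappa$-sequences of Lebesgue measurable $f_\alpha:[0,1]\to\mathbb R$ such that there is an integrable $g$ with $|f_\alpha|\le g$ a.e. for all $\alpha$, $f_\alpha\to f$ a.e. for some integrable $f$, and $\int|f_\alpha-f|\,d\lambda\not\to0$. $S$ is strongly $\mu$-algebrable if there is a set $X$ of $\mu$ algebraically independent elements such that every nonzero element of the (non-unital) algebra generated by $X$ belongs to $S$. *)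

(* Defs.v *)
From HB Require Import structures.
From mathcomp Require Import all_boot all_order all_algebra.
From mathcomp Require Import all_classical all_reals all_analysis.
From mathcomp Require mpoly.
Set Implicit Arguments. Unset Strict Implicit. Unset Printing Implicit Defensive.
Import Order.TTheory GRing.Theory Num.Theory.
Import numFieldNormedType.Exports.
Local Open Scope classical_set_scope.
Local Open Scope ring_scope.

Notation leb R := (@completed_lebesgue_measure R).
(* The real line carrying the Lebesgue (completed) measurable sets; its
   carrier is (convertible to) R. *)
Notation LR R := (caratheodory_type (R:=R)
   (T:=lebesgue_stieltjes_measure_ocitv_type__canonical__measurable_structure_SemiRingOfSets R)
   (wlength (@idfun R))^*%mu).
Notation I01 R := (`[(0:R), (1:R)]%classic : set (LR R)).

Definition card_lt (T U : Type) : Prop :=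
  ([set: T] #<= [set: U])%card /\ ~ ([set: U] #<= [set: T])%card.

Definition nullset01 (R : realType) (A : set R) : Prop :=
  A `<=` `[0, 1]%classic /\ (leb R).-negligible A.

(* The index type I has cardinality add(N): some I-indexed family of null
   sets has a non-null union, and every family of null sets of strictly
   smaller cardinality has a null union. *)
Definition has_card_addN (R : realType) (I : Type) : Prop :=
  (exists F : I -> set R, (forall i, nullset01 (F i)) /\
      ~ nullset01 (\bigcup_i F i)) /\
  (forall (J : Type), card_lt J I -> forall F : J -> set R,
      (forall j, nullset01 (F j)) -> nullset01 (\bigcup_j F j)).

Definition has_card_covN (R : realType) (I : Type) : Prop :=
  (exists F : I -> set R, (forall i, nullset01 (F i)) /\
      `[0, 1]%classic `<=` \bigcup_i F i) /\
  (forall (J : Type), card_lt J I -> forall F : J -> set R,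
      (forall j, nullset01 (F j)) -> ~ (`[0, 1]%classic `<=` \bigcup_j F j)).

(* (I, lt) is a strict well-order which is an initial ordinal, i.e. it is
   order-isomorphic to the cardinal |I| viewed as a von Neumann ordinal. *)
Definition initial_ordinal (I : Type) (lt : I -> I -> Prop) : Prop :=
  (forall a, ~ lt a a) /\
  (forall a b c, lt a b -> lt b c -> lt a c) /\
  (forall a b, lt a b \/ a = b \/ lt b a) /\
  well_founded lt /\
  (forall a : I, card_lt {b : I | lt b a} I).

Definition kconv (I : Type) (lt : I -> I -> Prop) (T : topologicalType)
    (x : I -> T) (l : T) : Prop :=
  forall U, nbhs l U -> exists a0, forall a, lt a0 a -> U (x a).

Definition ND (R : realType) (I : Type) (lt : I -> I -> Prop)
    (f : I -> R -> R) : Prop :=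
  (forall a, measurable_fun (I01 R) (f a : LR R -> R)) /\
  (exists g : R -> R, (leb R).-integrable (I01 R) (EFin \o g) /\
     forall a, {ae leb R, forall t, `[0, 1]%classic t -> `|f a t| <= g t}) /\
  (exists F : R -> R, (leb R).-integrable (I01 R) (EFin \o F) /\
     {ae leb R, forall t, `[0, 1]%classic t -> kconv lt (fun a => f a t) (F t)} /\
     ~ kconv lt (fun a => (\int[leb R]_(t in I01 R) `|f a t - F t|%:E)%E)
                0%E).

Definition peval (R : realType) (I : Type) (n : nat) (P : mpoly.mpoly n R)
    (x : 'I_n -> I -> R -> R) : I -> R -> R :=
  fun a t => mpoly.meval (fun i => x i a t) P.

(* Equality in (R^[0,1])^I: functions are only considered on [0,1]. *)
Definition eq01 (I : Type) (R : realType) (f g : I -> R -> R) : Prop :=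
  forall a t, `[0, 1]%classic t -> f a t = g a t.

(* S is strongly c-algebrable in (R^[0,1])^I: there is a family of
   continuum-many (indexed injectively by R) algebraically independent
   elements, and every nonzero element of the non-unital algebra they
   generate, i.e. every P(x_1..x_n) with P a nonzero polynomial without
   constant term and x_1..x_n distinct generators, lies in S. *)
Definition strongly_c_algebrable (R : realType) (I : Type)
    (S : (I -> R -> R) -> Prop) : Prop :=
  exists x : R -> I -> R -> R,
    (forall r s, eq01 (x r) (x s) -> r = s) /\
    forall (n : nat) (r : 'I_n -> R), injective r ->
    forall P : mpoly.mpoly n R, (exists m, mpoly.mcoeff m P != 0) -> mpoly.mcoeff (@mpoly.mnm0 n) P = 0 ->
      ~ eq01 (peval P (x \o r)) (fun _ _ => 0) /\ S (peval P (x \o r)).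

(* Main.v *)
Require Import Defs.
From HB Require Import structures.
From mathcomp Require Import all_boot all_order all_algebra.
From mathcomp Require Import all_classical all_reals all_analysis.
From mathcomp Require mpoly.
From mathcomp Require Import ring lra.
Import (canonicals, coercions) mpoly.
Set Implicit Arguments. Unset Strict Implicit. Unset Printing Implicit Defensive.
Import Order.TTheory GRing.Theory Num.Theory.
Import numFieldNormedType.Exports.
Local Open Scope classical_set_scope.
Local Open Scope ring_scope.




Section Asym.
Context {R : realType}.

Lemma expR_lin_cvg0 (k : R) : 0 < k -> expR (- (k * w)) @[w --> +oo] --> 0.
Proof.
move=> k0.
apply: (@cvg_comp _ _ _ (fun w => k * w) (fun x => expR (- x)) _ (+oo : set_system R)).
  exact: (gt0_cvgMry k0 cvg_id).
exact: cvgr_expR.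
Qed.

Lemma lead_cvgy (n : nat) (s d : 'I_n -> R) (j : 'I_n) :
  0 < d j -> 0 < s j -> (forall i, i != j -> d i != 0 -> s i < s j) ->
  (\sum_i d i * expR (s i * w)) @[w --> +oo] --> +oo.
Proof.
move=> dj0 sj0 hs.
pose B w := \sum_(i | i != j) d i * expR ((s i - s j) * w).
have B0 : B w @[w --> +oo] --> 0.
  rewrite (_ : 0 = \sum_(i | i != j) (0:R)); last by rewrite big1.
  apply: cvg_big => //; first exact: add_continuous.
  move=> i ij; have [->|di0] := eqVneq (d i) 0.
    under eq_fun do rewrite mul0r; exact: cvg_cst.
  rewrite -[0](mulr0 (d i)); apply: cvgM; first exact: cvg_cst.
  under eq_fun do rewrite -[(s i - s j)]opprB mulNr.
  by apply: expR_lin_cvg0; rewrite subr_gt0; exact: hs.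
have key w : \sum_i d i * expR (s i * w) = expR (s j * w) * (d j + B w).
  rewrite (bigD1 j) //= mulrDr mulrC; congr (_ + _).
  rewrite /B mulr_sumr; apply: eq_bigr => i _.
  by rewrite mulrCA -expRD mulrBl addrC subrK.
have dB : \forall w \near +oo, d j / 2 < d j + B w.
  apply: (cvgr_gt (d j)); last by rewrite ltr_pdivrMr // ltr_pMr // ltr1n.
  rewrite -[X in _ --> X]addr0; apply: cvgD => //; exact: cvg_cst.
apply/cvgryPge => A.
have c0 : 0 < s j * (d j / 2) by rewrite mulr_gt0 // divr_gt0.
near=> w.
rewrite key.
have hB : d j / 2 < d j + B w by near: w.
have w0 : 0 <= w by near: w; apply: nbhs_pinfty_ge; rewrite num_real.
have wA : A / (s j * (d j / 2)) <= w by near: w; apply: nbhs_pinfty_ge; rewrite num_real.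
have e1 : s j * w <= expR (s j * w).
  by apply: le_trans (expR_ge1Dx _); rewrite lerDr.
apply: (@le_trans _ _ ((s j * w) * (d j / 2))); last first.
  apply: ler_pM => //; [by rewrite mulr_ge0 // ltW | by rewrite ltW // divr_gt0 | exact: ltW].
have := ler_wpM2l (ltW c0) wA.
rewrite mulrCA mulfV ?gt_eqF // mulr1 => /le_trans; apply.
by rewrite mulrAC.
Unshelve. all: by end_near.
Qed.


Lemma exists_min (T : eqType) (P : T -> T -> Prop) (l : seq T) :
  (forall x y, x != y -> P x y \/ P y x) -> (forall x y z, P x y -> P y z -> P x z) ->
  l != [::] -> exists2 x, x \in l & forall y, y \in l -> y != x -> P x y.
Proof.
move=> tot tr; elim: l => // a l IH _.
have [->|ln0] := eqVneq l [::].
  exists a; first by rewrite mem_head.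
  by move=> y; rewrite inE => /eqP ->; rewrite eqxx.
have [b bl bmin] := IH ln0.
have [->|ab] := eqVneq a b.
  exists b; first by rewrite mem_head.
  move=> y; rewrite inE => /orP[/eqP->|yl]; first by rewrite eqxx.
  exact: bmin.
case: (tot a b ab) => [Pab|Pba].
- exists a; first by rewrite mem_head.
  move=> y; rewrite inE => /orP[/eqP->|yl]; first by rewrite eqxx.
  move=> ya; have [->|yb] := eqVneq y b; first exact Pab.
  exact: tr Pab (bmin y yl yb).
- exists b; first by rewrite inE bl orbT.
  move=> y; rewrite inE => /orP[/eqP->|yl] yb; first exact: Pba.
  exact: bmin.
Qed.

Section Mono.
Variables (n : nat) (s : 'I_n -> R).
Hypothesis spos : forall i, 0 < s i.
Hypothesis sinj : injective s.

Definition Dm (m : mpoly.multinom n) (w : R) : R :=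
  \sum_i (mpoly.fun_of_multinom m i)%:R * expR (s i * w).
Definition prec (m m' : mpoly.multinom n) : Prop :=
  (Dm m' w - Dm m w) @[w --> +oo] --> +oo.

Lemma prec_trans (a b c : mpoly.multinom n) : prec a b -> prec b c -> prec a c.
Proof.
move=> hab hbc; apply/cvgryPge => A; near=> w.
have h1 : A <= Dm c w - Dm b w by near: w; exact: cvgry_ge.
have h2 : 0 <= Dm b w - Dm a w by near: w; exact: cvgry_ge.
lra.
Unshelve. all: by end_near.
Qed.

Lemma prec_total (m m' : mpoly.multinom n) : m != m' -> prec m m' \/ prec m' m.
Proof.
move=> mm'.
pose d i : R := (mpoly.fun_of_multinom m' i)%:R - (mpoly.fun_of_multinom m i)%:R.
have Dd w : Dm m' w - Dm m w = \sum_i d i * expR (s i * w).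
  by rewrite /Dm -sumrB; apply: eq_bigr => i _; rewrite mulrBl.
have [i0 hi0] : exists i, mpoly.fun_of_multinom m i != mpoly.fun_of_multinom m' i.
  case: (pselect (exists i, mpoly.fun_of_multinom m i != mpoly.fun_of_multinom m' i)) => // ne; exfalso.
  move/negP: mm'; apply; apply/eqP/mpoly.mnmP => i; apply/eqP.
  by apply/negPn/negP => h; apply: ne; exists i.
have [j Jj jmax] := arg_maxP (fun i => s i) (P:=[pred i | mpoly.fun_of_multinom m i != mpoly.fun_of_multinom m' i]) hi0.
have dne i : (d i != 0) = (mpoly.fun_of_multinom m i != mpoly.fun_of_multinom m' i).
  by rewrite /d subr_eq0 eqr_nat eq_sym.
have hs i : i != j -> d i != 0 -> s i < s j.
  move=> ij; rewrite dne => Ji; have sij : s i <= s j := jmax i Ji.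
  rewrite lt_neqAle sij andbT.
  by apply/negP => /eqP /sinj eij; rewrite eij eqxx in ij.
have : d j != 0 by rewrite dne.
rewrite neq_lt => /orP [dj|dj].
- right; rewrite /prec.
  have -> : (fun w => Dm m w - Dm m' w) = (fun w => \sum_i (- d i) * expR (s i * w)).
    by apply/funext => w; rewrite -opprB Dd -sumrN; apply: eq_bigr => i _; rewrite mulNr.
  apply: (@lead_cvgy _ s _ j); first by rewrite oppr_gt0.
    exact: spos.
  by move=> i ij; rewrite oppr_eq0; exact: hs.
- left; rewrite /prec.
  have -> : (fun w => Dm m' w - Dm m w) = (fun w => \sum_i d i * expR (s i * w)).
    by apply/funext => w; rewrite Dd.
  exact: (@lead_cvgy _ s _ j).
Qed.

Lemma meval_ne0_near (P : mpoly.mpoly n R) : P != 0 ->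
  \forall w \near +oo, mpoly.meval (fun i => expR (- expR (s i * w))) P != 0.
Proof.
move=> P0.
have eq1 w : mpoly.meval (fun i => expR (- expR (s i * w))) P =
    \sum_(m <- mpoly.msupp P) mpoly.mcoeff m P * expR (- Dm m w).
  rewrite mpoly.mevalE; apply: eq_bigr => m _; congr (_ * _).
  rewrite /Dm -sumrN expR_sum; apply: eq_bigr => i _.
  by rewrite -mulrN expRM_natl.
have sn : mpoly.msupp P != [::] by rewrite mpoly.msupp_eq0.
have [ms msin msmin] := @exists_min _ prec _ prec_total prec_trans sn.
pose Br w := \sum_(m <- mpoly.msupp P) mpoly.mcoeff m P * expR (- (Dm m w - Dm ms w)).
have eq2 w : \sum_(m <- mpoly.msupp P) mpoly.mcoeff m P * expR (- Dm m w) =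
    expR (- Dm ms w) * Br w.
  rewrite /Br mulr_sumr; apply: eq_bigr => m _; rewrite mulrCA -expRD.
  by rewrite opprB addKr.
have Blim : Br w @[w --> +oo] --> mpoly.mcoeff ms P.
  have -> : mpoly.mcoeff ms P = \sum_(m <- mpoly.msupp P | m \in mpoly.msupp P)
      (if m == ms then mpoly.mcoeff m P else 0).
    rewrite -big_seq (big_rem ms) //= eqxx big1_seq ?addr0 // => m /andP [_ mr].
    have : m != ms.
      by apply: contraTneq mr => ->; rewrite mem_rem_uniqF // mpoly.msupp_uniq.
    by move/negPf ->.
  rewrite /Br; under eq_fun do rewrite big_seq.
  apply: cvg_big => //; first exact: add_continuous.
  move=> m min; case: eqP => [->|/eqP mms].
    under eq_fun do rewrite subrr oppr0 expR0 mulr1; exact: cvg_cst.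
  rewrite -[0](mulr0 (mpoly.mcoeff m P)); apply: cvgM; first exact: cvg_cst.
  exact: (cvg_comp _ _ (msmin m min mms) (@cvgr_expR R)).
have c0 : mpoly.mcoeff ms P != 0 by rewrite -mpoly.mcoeff_msupp.
have := @cvgr_neq0 _ _ _ _ _ _ _ Blim c0.
move=> hB; near=> w.
have Bw : Br w != 0 by near: w; exact: hB.
by rewrite eq1 eq2 mulf_neq0 // gt_eqF // expR_gt0.
Unshelve. all: by end_near.
Qed.
End Mono.

End Asym.



Section Meas.
Context {R : realType}.

Lemma borel_leb (A : set R) : measurable A -> measurable (A : set (LR R)).
Proof. move=> mA; exact: sub_caratheodory. Qed.

Lemma mfun_leb (D : set (LR R)) (f : R -> R) :
  measurable_fun [set: R] f -> measurable_fun D (f : LR R -> R).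
Proof.
move=> mf mD Y mY; apply: measurableI => //.
have := mf measurableT Y mY; rewrite setTI; exact: borel_leb.
Qed.

Definition hfun (r t : R) : R := expR (- expR (expR r * (- ln t))).

Lemma hfun_ge0 r t : 0 <= hfun r t.
Proof. exact: expR_ge0. Qed.

Lemma hfun_le1 r t : hfun r t <= 1.
Proof. by rewrite /hfun expR_le1 oppr_le0 expR_ge0. Qed.

Lemma measurable_hfun r : measurable_fun [set: R] (hfun r).
Proof.
rewrite /hfun.
apply: (@measurableT_comp _ _ _ _ _ _ expR _ (fun t => - expR (expR r * - ln t))).
  exact: measurable_realfun.measurable_expR.
apply: measurable_realfun.measurable_funN.
apply: (@measurableT_comp _ _ _ _ _ _ expR _ (fun t => expR r * - ln t)).
  exact: measurable_realfun.measurable_expR.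
apply: measurable_realfun.measurable_funM; first exact: measurable_cst.
apply: measurable_realfun.measurable_funN; exact: measurable_realfun.measurable_ln.
Qed.

Definition Gf n (r : 'I_n -> R) (P : mpoly.mpoly n R) (t : R) : R :=
  mpoly.meval (fun i => hfun (r i) t) P.

Lemma measurable_Gf n (r : 'I_n -> R) P : measurable_fun [set: R] (Gf r P).
Proof.
have -> : Gf r P = fun t => \sum_(m <- mpoly.msupp P)
    mpoly.mcoeff m P * \prod_i (hfun (r i) t) ^+ m i.
  by apply/funext => t; rewrite /Gf mpoly.mevalE.
apply: measurable_sum => m; apply: measurable_realfun.measurable_funM; first exact: measurable_cst.
apply: measurable_prod => i _; apply: measurable_realfun.measurable_funX; exact: measurable_hfun.
Qed.

Definition Bnd n (P : mpoly.mpoly n R) : R := \sum_(m <- mpoly.msupp P) `|mpoly.mcoeff m P|.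

Lemma Bnd_ge0 n (P : mpoly.mpoly n R) : 0 <= Bnd P.
Proof. by apply: sumr_ge0 => m _. Qed.

Lemma Gf_bound n (r : 'I_n -> R) P t : `|Gf r P t| <= Bnd P.
Proof.
rewrite /Gf mpoly.mevalE; apply: le_trans (ler_norm_sum _ _ _) _.
apply: ler_sum => m _; rewrite normrM -[X in _ <= X]mulr1 ler_wpM2l //.
rewrite normr_prod; apply: prodr_ile1 => i _.
rewrite normr_ge0 /= normrX; apply: exprn_ile1 => //.
by rewrite ger0_norm ?hfun_ge0 // hfun_le1.
Qed.

Lemma Gf_nonvanish n (r : 'I_n -> R) P : injective r -> P != 0 ->
  exists2 d, 0 < d & forall t, 0 < t -> t < d -> Gf r P t != 0.
Proof.
move=> rinj P0.
have := @meval_ne0_near R n (fun i => expR (r i)) (fun i => expR_gt0 _)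
  (fun i j h => rinj _ _ (expR_inj h)) P P0.
move=> [M [Mr HM]].
exists (expR (- M)); first exact: expR_gt0.
move=> t t0 td; apply: HM.
have : ln t < ln (expR (- M)) by rewrite ltr_ln // posrE expR_gt0.
rewrite expRK; lra.
Qed.

End Meas.



Section Constr.
Context {R : realType} {I : Type} (lt : I -> I -> Prop) (N : I -> set R).

Definition xf (r : R) (a : I) (t : R) : R := if pselect (N a t) then 0 else hfun r t.

Lemma meval_zero n (P : mpoly.mpoly n R) :
  mpoly.mcoeff (@mpoly.mnm0 n) P = 0 -> mpoly.meval (fun _ => 0) P = 0.
Proof.
move=> P0; rewrite mpoly.mevalE big1_seq // => m /andP [_ mP].
have m0 : m != @mpoly.mnm0 n.
  by apply: contraTneq mP => ->; rewrite mpoly.mcoeff_msupp P0 eqxx.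
have [i mi] : exists i, m i != 0%N.
  case: (pselect (exists i, m i != 0%N)) => // ne; exfalso.
  move/negP: m0; apply; apply/eqP/mpoly.mnmP => i; rewrite mpoly.mnm0E.
  by apply/eqP/negPn/negP => h; apply: ne; exists i.
apply/eqP; rewrite mulf_eq0; apply/orP; right.
apply/prodf_eq0; exists i => //.
by rewrite expr0n (negPf mi).
Qed.

Lemma peval_xf n (r : 'I_n -> R) (P : mpoly.mpoly n R) a t :
  mpoly.mcoeff (@mpoly.mnm0 n) P = 0 ->
  peval P (xf \o r) a t = if pselect (N a t) then 0 else Gf r P t.
Proof.
move=> P0; rewrite /peval /xf /=; case: pselect => h.
  exact: meval_zero.
by [].
Qed.


Hypothesis HN : forall a, nullset01 (N a).
Hypothesis Hcov : forall t, `[0, 1]%classic t -> exists b, forall a, lt b a -> N a t.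
Hypothesis Hnomax : forall a0, exists a, lt a0 a.
Variable i0 : I.

Lemma mI01 : measurable (I01 R).
Proof. exact: borel_leb. Qed.

Section Fixed.
Variables (n : nat) (r : 'I_n -> R) (P : mpoly.mpoly n R).
Hypothesis rinj : injective r.
Hypothesis Pnz : exists m, mpoly.mcoeff m P != 0.
Hypothesis Pc0 : mpoly.mcoeff (@mpoly.mnm0 n) P = 0.

Let f := peval P (xf \o r).
Let fE a t : f a t = if pselect (N a t) then 0 else Gf r P t.
Proof. exact: peval_xf. Qed.

Let mNC a : measurable (~` N a : set (LR R)).
Proof. apply: measurableC; exact: negligible_sub_caratheodory (HN a).2. Qed.

Lemma mf a : measurable_fun (I01 R) (f a : LR R -> R).
Proof.
have -> : (f a : LR R -> R) = (fun t => (\1_(~` N a) t : R) * Gf r P t).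
  apply/funext => t; rewrite fE indicE; case: pselect => h.
    by rewrite memNset ?mul0r.
  by rewrite mem_set ?mul1r.
apply: measurable_realfun.measurable_funM.
  exact: measurable_realfun.measurable_indic.
apply: mfun_leb; exact: measurable_Gf.
Qed.


Let c := (\int[leb R]_(t in I01 R) (`|Gf r P t|)%:E)%E.

Lemma int_eq a : (\int[leb R]_(t in I01 R) (`|f a t - 0|)%:E)%E = c.
Proof.
transitivity (\int[leb R]_(t in I01 R) (`|f a t|)%:E)%E.
  by apply: eq_integral => t _; rewrite subr0.
apply: ae_eq_integral.
- exact: mI01.
- apply/measurable_realfun.measurable_EFinP.
  exact: (measurableT_comp (@measurable_realfun.normr_measurable R setT) (mf a)).
- apply/measurable_realfun.measurable_EFinP.
  have h1 := mfun_leb (D := I01 R) (measurable_Gf r P).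
  have h2 := (measurableT_comp (@measurable_realfun.normr_measurable R setT) h1).
  exact: h2.
- apply: (negligibleS _ (HN a).2) => t /=.
  case: (pselect (N a t)) => // Nt h; exfalso; apply: h => _.
  by rewrite fE; case: pselect.
Qed.

Lemma P_neq0 : P != 0.
Proof.
apply/negP => /eqP P0; case: Pnz => m; by rewrite P0 mpoly.mcoeff0 eqxx.
Qed.

Lemma c_ne0 : c != 0%E.
Proof.
apply/eqP => c0.
have [d d0 Hd] := Gf_nonvanish rinj P_neq0.
have mG := proj2 (@measurable_realfun.measurable_EFinP _ (LR R) R (I01 R) (Gf r P))
  (mfun_leb (measurable_Gf r P)).
have : (\int[leb R]_(t in I01 R) `|(Gf r P t)%:E|)%E = 0%E.
  by rewrite -c0; apply: eq_integral => t _ /=.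
move/(ae_eq_integral_abs _ mI01 mG) => Hae.
pose e := Num.min d 1.
have e0 : 0 < e by rewrite lt_min d0 ltr01.
have : (leb R).-negligible (`]0, e[%classic : set (LR R)).
  apply: (negligibleS _ Hae) => t /=; rewrite in_itv /= => /andP [t0 te] h.
  have tne : Gf r P t != 0.
    by apply: Hd => //; apply: (lt_le_trans te); rewrite ge_min lexx.
  apply/negP: tne; rewrite negbK; apply/eqP.
  have : (Gf r P t)%:E = 0%E.
    apply: h.

    rewrite in_itv /= (ltW t0) /=.
    by apply: ltW; apply: (lt_le_trans te); rewrite ge_min lexx orbT.
  by case.
move/negligibleP => /(_ (borel_leb (measurable_itv _))).
change (lebesgue_measure (`]0, e[%classic : set R) = 0%E -> False).
rewrite lebesgue_measure_itv /= lte_fin e0 /= => /eqP.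
by rewrite sube0 eqe gt_eqF.
Qed.



Lemma c_gt0 : (0 < c)%E.
Proof.
rewrite lt_neqAle eq_sym c_ne0 /=; apply: integral_ge0 => t _; by rewrite lee_fin.
Qed.

Lemma no_kconv : ~ kconv lt (fun a => (\int[leb R]_(t in I01 R) (`|f a t - 0|)%:E)%E) 0%E.
Proof.
move=> kc.
have [a0 Ha0] := kc _ (open_ereal_lt' c_gt0).
have [a Ha] := Hnomax a0.
by have := Ha0 a Ha; rewrite int_eq ltxx.
Qed.

Lemma not_eq01 : ~ eq01 f (fun _ _ => 0).
Proof.
move=> h; apply/negP: c_ne0; apply/negPn/eqP.
rewrite -(int_eq i0).
transitivity (\int[leb R]_(t in I01 R) (cst 0%E) t)%E; last exact: integral0.
apply: eq_integral => t; rewrite inE => t01 /=.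
by rewrite h // subr0 normr0.
Qed.

Lemma ND_f : ND lt f.
Proof.
split; first exact: mf.
split.
  exists (fun _ => Bnd P); split.
    apply/integrableP; split; first exact: measurable_cst.
 rewrite integral_cst; last exact: mI01.
    rewrite [X in (_ * X)%E](_ : _ = 1%:E); first by rewrite mule1 ltry.
    change (lebesgue_measure (`[0, 1]%classic : set R) = 1%:E).
    by rewrite lebesgue_measure_itv /= lte_fin ltr01 /= sube0.
  move=> a; apply: aeW => t _; rewrite fE; case: (pselect (N a t)) => [_|_] /=.
    by rewrite normr0 Bnd_ge0.
  exact: Gf_bound.
exists (fun _ => 0); split; first exact: integrable0.
split; last exact: no_kconv.
apply: aeW => t t01; have [b Hb] := Hcov t01.
move=> U nU; exists b => a ba; rewrite fE; case: (pselect (N a t)) => [_|h] /=.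
  exact: nbhs_singleton nU.
by exfalso; apply: h; exact: Hb.
Qed.

End Fixed.
End Constr.



Theorem mainTheorem14 (R : realType) (I : Type) (lt : I -> I -> Prop) :
  initial_ordinal lt ->
  has_card_addN R I ->
  has_card_covN R I ->
  strongly_c_algebrable (@ND R I lt).
Proof.
move=> [irr [tr [tri [wf card]]]] [[Fa [Fanull Fanon]] addsmall] [[C [Cnull Ccov]] _].
pose Nc (a : I) : set R := \bigcup_(j : {b : I | lt b a}) C (sval j).
have HN a : nullset01 (Nc a).
  exact: (addsmall _ (card a) (fun j => C (sval j)) (fun j => Cnull _)).
have Hcov t : `[0, 1]%classic t -> exists b, forall a, lt b a -> Nc a t.
  move=> t01; have [b _ Cbt] := Ccov t t01.
  by exists b => a ba; exists (exist _ b ba).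
have Hnomax a0 : exists a, lt a0 a.
  apply: contrapT => hno; apply: Fanon; split.
    by move=> t [i _ Fit]; exact: (Fanull i).1.
  have Hs := (addsmall _ (card a0) (fun j => Fa (sval j)) (fun j => Fanull _)).2.
  apply: (negligibleS _ (negligibleU (Fanull a0).2 Hs)).
  move=> t [i _ Fit].
  case: (tri i a0) => [ia|[eia|ai]]; first by right; exists (exist _ i ia).
    by left; rewrite -eia.
  by exfalso; apply: hno; exists i.
have [i0 _] : exists i : I, True.
  apply: contrapT => noI; apply: Fanon; split.
    by move=> t [i]; case: noI; exists i.
  apply: (negligibleS _ (negligible_set0 _)) => t [i]; by case: noI; exists i.
exists (xf Nc); split; last first.
  move=> n r rinj P Pnz Pc0; split.
    exact: (not_eq01 HN i0 rinj Pnz Pc0).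
  exact: (ND_f HN Hcov Hnomax rinj Pnz Pc0).
move=> r s hrs; case: (eqVneq r s) => // rs; exfalso.
pose o1 : 'I_2 := @Ordinal 2 1 isT.
pose rr : 'I_2 -> R := fun i => if i == ord0 then r else s.
have rinj : injective rr.
  move=> i j; rewrite /rr.
  case: i => [[|[|?]] ?]; case: j => [[|[|?]] ?] //= h; try by apply: val_inj.
    by rewrite h eqxx in rs.
  by rewrite h eqxx in rs.
pose Q : mpoly.mpoly 2 R := mpoly.mpolyX R (mpoly.mnm1 ord0) - mpoly.mpolyX R (mpoly.mnm1 o1).
have U01 : mpoly.mnm1 o1 != mpoly.mnm1 (@ord0 1).
  by apply/negP => /eqP/mpoly.mnmP/(_ ord0); rewrite !mpoly.mnm1E.
have Qnz : exists m, mpoly.mcoeff m Q != 0.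
  exists (mpoly.mnm1 ord0); rewrite mpoly.mcoeffB !mpoly.mcoeffX eqxx (negPf U01).
  by rewrite subr0 oner_neq0.
have Qc0 : mpoly.mcoeff (@mpoly.mnm0 2) Q = 0.
  by rewrite mpoly.mcoeffB !mpoly.mcoeffX !mpoly.mnm1_eq0 subrr.
apply: (not_eq01 HN i0 rinj Qnz Qc0) => a t t01.
rewrite /peval mpoly.mevalB !mpoly.mevalXU /= /rr /=.
by rewrite hrs // subrr.
Qed.
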